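(* Let $n,m\ge0$ be integers, $d_1,\ldots,d_m,s$ positive integers, $g_\bullet=|n;d_1,\ldots,d_m|$ and $h_\bullet=|n;d_1,\ldots,d_m,s|$. Suppose $g_\bullet$ is unimodal at each tail. If there is a positive integer $i$ with $h_i\le h_{i-1}$, then $h_d\le h_{d-1}$ for all $d\ge i$; in this case, if $n\ge1$, then $h^{(1)}_\bullet=|n-1;d_1,\ldots,d_m,s|$.
   Context: For $P=\sum p_iz^i\in\mathbb{Z}[[z]]$ let $t=\min\{d:p_d\le0\}$ and $|P|=\sum q_iz^i$ with $q_i=p_i$ for $i<t$, $q_i=0$ for $i\ge t$. The Fröberg sequence $|n;d_1,\ldots,d_m|$ is the sequence $(h_0,h_1,\ldots)$ with $\sum h_iz^i=\left|\prod_{j=1}^m(1-z^{d_j})/(1-z)^n\right|$. For a sequence $h_\bullet$ of nonnegative integers with $h_0=1$: $h^{(0)}_\bullet=h_\bullet$; $h^{(i)}_0=1$ and $h^{(i)}_d=\max\{0,h^{(i-1)}_d-h^{(i-1)}_{d-1}\}$ for $d\ge1$ (in particular $h^{(1)}$ is given by this formula with $i=1$; in the definition of unimodality below it is used for $1\le i<h_1$). For $0\le i<\max\{1,h_1\}$, $r_i=\min\{d\ge1:h^{(i)}_d\le h^{(i)}_{d-1}\}$ ($\infty$ if none), $D(h_\bullet)=\min\{i:r_i<\infty\}$. The sequence is unimodal at each tail if for every $i$ with $D(h_\bullet)\le i<\max\{1,h_1\}$, $h^{(i)}_d\le h^{(i)}_{d-1}$ for all $d\ge r_i$. *)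

(* Defs.v *)
From mathcomp Require Import all_boot all_order all_algebra.
Set Implicit Arguments. Unset Strict Implicit. Unset Printing Implicit Defensive.
Import Order.TTheory GRing.Theory Num.Theory.

(* Formal power series in Z[[z]], as coefficient functions. *)
Definition ser := nat -> int.

Definition ser_one : ser := fun i => if i == 0%N then 1%R else 0%R.

(* multiplication by (1 - z^d) *)
Definition mul_1mz (d : nat) (p : ser) : ser :=
  fun i => (p i - (if (d <= i)%N then p (i - d)%N else 0))%R.

(* multiplication by 1/(1 - z) = 1 + z + z^2 + ... *)
Definition div_1mz (p : ser) : ser :=
  fun i => (\sum_(j < i.+1) p j)%R.

(* prod_{d in ds} (1 - z^d) / (1 - z)^n *)
Definition frob_ser (n : nat) (ds : seq nat) : ser :=
  iter n div_1mz (foldr mul_1mz ser_one ds).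

(* |P| : keep coefficients q_i = p_i for i < t = min{d : p_d <= 0}, 0 after.
   i < t iff p_j > 0 for all j <= i. *)
Definition trunc_ser (p : ser) : ser :=
  fun i => if [forall j : 'I_i.+1, (0 < p j)%R] then p i else 0%R.

(* The Froberg sequence |n; d_1, ..., d_m| (entries are nonnegative). *)
Definition frob (n : nat) (ds : seq nat) : nat -> nat :=
  fun i => absz (trunc_ser (frob_ser n ds) i).

(* h^(1) from h : h^(1)_0 = 1, h^(1)_d = max(0, h_d - h_{d-1}) *)
Definition hder (h : nat -> nat) : nat -> nat :=
  fun d => if d == 0%N then 1%N else (h d - h d.-1)%N.

Definition hiter (i : nat) (h : nat -> nat) : nat -> nat := iter i hder h.

(* r_i = r  (r_i = min{d >= 1 : h^(i)_d <= h^(i)_{d-1}}) *)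
Definition is_r (h : nat -> nat) (i r : nat) : Prop :=
  [/\ (1 <= r)%N, (hiter i h r <= hiter i h r.-1)%N &
      forall d, (1 <= d)%N -> (d < r)%N -> (hiter i h d.-1 < hiter i h d)%N].

Definition r_finite (h : nat -> nat) (i : nat) : Prop :=
  exists2 d, (1 <= d)%N & (hiter i h d <= hiter i h d.-1)%N.

(* unimodal at each tail: for every i with D(h) <= i < max(1, h_1),
   h^(i)_d <= h^(i)_{d-1} for all d >= r_i.
   D(h) <= i  iff some j <= i (with j < max(1,h_1)) has r_j finite. *)
Definition unimodal_tails (h : nat -> nat) : Prop :=
  forall i, (i < maxn 1 (h 1%N))%N ->
    (exists2 j, (j <= i)%N & r_finite h j) ->
    forall r, is_r h i r ->
    forall d, (r <= d)%N -> (hiter i h d <= hiter i h d.-1)%N.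

(* Main.v *)
Require Import Defs.
From mathcomp Require Import all_boot all_order all_algebra zify.
From Stdlib Require Import FunctionalExtensionality.
Import Order.TTheory GRing.Theory Num.Theory.

Lemma mul_comm d e (p : ser) : mul_1mz d (mul_1mz e p) = mul_1mz e (mul_1mz d p).
Proof.
apply: functional_extensionality => i; rewrite /mul_1mz.
case: (leqP d i) => hd; case: (leqP e i) => he //=.
- have -> : (e <= i - d) = (d <= i - e) by apply/idP/idP => H; lia.
  case: ifP => _; last lia.
  have -> : (i - d - e = i - e - d)%N by lia. lia.
- have -> : (e <= i - d) = false by apply/negbTE; apply/negP => H; lia. lia.
- have -> : (d <= i - e) = false by apply/negbTE; apply/negP => H; lia. lia.
Qed.

Lemma sum_shift (s : nat) (p : ser) (i : nat) :
  (\sum_(j < i.+1) (if (s <= j)%N then p (j - s)%N else 0) =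
   if (s <= i)%N then \sum_(j < (i - s).+1) p j else 0)%R.
Proof.
elim: i => [|i IH].
  rewrite big_ord1 /=; case: s => //= ; by rewrite big_ord1.
rewrite big_ord_recr /= IH.
case: (ssrnat.ltngtP s i.+1) => hs.
- rewrite ifT; last lia.
  have -> : (i.+1 - s = (i - s).+1)%N by lia.
  by rewrite [in RHS]big_ord_recr.
- rewrite ifF; last lia.
  by rewrite add0r.
- rewrite ifF; last lia.
  by rewrite hs subnn big_ord1 add0r.
Qed.

Lemma div_mul s (p : ser) : div_1mz (mul_1mz s p) = mul_1mz s (div_1mz p).
Proof.
apply: functional_extensionality => i; rewrite /mul_1mz /div_1mz.
rewrite sumrB sum_shift; case: ifP => //.
Qed.

Lemma frob_ser_rcons n ds s : frob_ser n (rcons ds s) = mul_1mz s (frob_ser n ds).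
Proof.
rewrite /frob_ser foldr_rcons.
have -> : foldr mul_1mz (mul_1mz s ser_one) ds = mul_1mz s (foldr mul_1mz ser_one ds).
  by elim: ds => //= d ds ->; rewrite mul_comm.
elim: n => //= n ->; by rewrite div_mul.
Qed.

Lemma frob_ser0 n ds : all (fun d => 0 < d) ds -> frob_ser n ds 0 = 1%R.
Proof.
move=> H; rewrite /frob_ser; elim: n => /= [|n IH].
  elim: ds H => //= d ds IH /andP [hd H]; rewrite /mul_1mz /=.
  by rewrite leqn0 (negbTE (lt0n_neq0 hd)) subr0 IH.
by rewrite /div_1mz big_ord1.
Qed.

Definition tailP (f : nat -> nat) : Prop :=
  forall k, 1 <= k -> f k <= f k.-1 -> forall k', k <= k' -> f k' <= f k'.-1.

Lemma decr f k : tailP f -> 1 <= k -> f k <= f k.-1 ->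
  forall x y, k.-1 <= x -> x <= y -> f y <= f x.
Proof.
move=> T hk hf x y hx; elim: y => [|y IH] hy.
  by have -> : x = 0 by lia.
case: (ssrnat.leqP x y) => hxy.
  apply: leq_trans (IH hxy); apply: (T k hk hf); lia.
by have -> : x = y.+1 by lia.
Qed.

Lemma exist_drop f x i : x < i -> f i <= f x -> exists k, [/\ x < k, k <= i & f k <= f k.-1].
Proof.
elim: i => [|i IH] // hx hf.
case: (ssrnat.leqP (f i.+1) (f i)) => h.
  by exists i.+1; split.
have hxi : x < i.
  case: (ssrnat.ltngtP x i) => // e; try lia. subst; lia.
case: (IH hxi); first lia.
move=> k [? ? ?]; exists k; split => //; lia.
Qed.

Lemma nat_core f s i j : tailP f -> 0 < s -> s <= i -> i <= j ->
  f i <= f (i - s) -> f j <= f (j - s).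
Proof.
move=> T hs hsi hij hf.
have [k [hk1 hk2 hk3]] := @exist_drop f (i - s) i ltac:(lia) hf.
have hP : exists k, (1 <= k) && (f k <= f k.-1) by exists k; apply/andP; split => //; lia.
case: (ex_minnP hP) => m /andP [hm1 hm2] hmin.
have hmk : m <= k by apply: hmin; apply/andP; split => //; lia.
have incr : forall x y, x <= y -> y <= m.-1 -> f x <= f y.
  move=> x y hxy; elim: y hxy => [|y IH] hxy hy.
    by have -> : x = 0 by lia.
  case: (ssrnat.leqP x y) => hx; last by have -> : x = y.+1 by lia.
  apply: leq_trans (IH hx ltac:(lia)) _.
  case: (ssrnat.leqP (f y.+1) (f y)) => h; last by apply: ltnW.
  have := hmin y.+1; rewrite h /= => /(_ isT); lia.
case: (ssrnat.leqP m.-1 (j - s)) => hjs.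
  apply: (@decr f m T hm1 hm2 (j - s) j); lia.
apply: leq_trans (_ : f j <= f i) _.
  apply: (@decr f m T hm1 hm2 i j); lia.
apply: leq_trans hf _; apply: incr; lia.
Qed.

Lemma tail_mono h lvl : unimodal_tails h -> lvl < maxn 1 (h 1) -> tailP (hiter lvl h).
Proof.
move=> U hl k hk hf k' hk'.
have hP : exists k, (1 <= k) && (hiter lvl h k <= hiter lvl h k.-1)
  by exists k; apply/andP; split.
case: (ex_minnP hP) => r /andP [hr1 hr2] hmin.
have hrk : r <= k by apply: hmin; apply/andP; split.
apply: (U lvl hl _ r) => //; last lia.
  by exists lvl => //; exists k.
split => // d hd1 hdr.
case: (ssrnat.leqP (hiter lvl h d) (hiter lvl h d.-1)) => // h'.
have := hmin d; rewrite hd1 h' /= => /(_ isT); lia.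
Qed.

Lemma posbP (q : ser) d : reflect (forall j, j <= d -> (0 < q j)%R) [forall j : 'I_d.+1, (0 < q j)%R].
Proof.
apply: (iffP forallP) => H.
  move=> j hj; exact: (H (Ordinal (hj : j < d.+1))).
move=> j; apply: H; exact: (ltn_ord j : (j < d.+1)).
Qed.

Lemma trunc_pos (q : ser) d : (forall j, j <= d -> (0 < q j)%R) -> (absz (trunc_ser q d) : int) = q d.
Proof.
move=> H; rewrite /trunc_ser; case: (posbP q d) => // _.
have := H d (leqnn d); lia.
Qed.

Lemma trunc_npos (q : ser) d : ~~ [forall j : 'I_d.+1, (0 < q j)%R] -> absz (trunc_ser q d) = 0.
Proof. by rewrite /trunc_ser => /negbTE ->. Qed.

Lemma pos_down (q : ser) d d' : (forall j, j <= d -> (0 < q j)%R) -> d' <= d ->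
  (forall j, j <= d' -> (0 < q j)%R).
Proof. move=> H h j hj; apply: H; lia. Qed.

Lemma pos_a (a : ser) s d : 0 < s ->
  (forall j, j <= d -> (0 < mul_1mz s a j)%R) -> forall j, j <= d -> (0 < a j)%R.
Proof.
move=> hs H j; elim: j {-2}j (leqnn j) => [|m IH] j hj hjd.
  have := H j hjd; rewrite /mul_1mz; have -> : j = 0 by lia.
  rewrite ifF; last lia. lia.
have := H j hjd; rewrite /mul_1mz; case: ifP => hsj; last lia.
have := IH (j - s) ltac:(lia) ltac:(lia). lia.
Qed.

Lemma dF_lt (a : ser) s j : (0 < s)%N -> (s < j)%N ->
  (mul_1mz s a j - mul_1mz s a j.-1 = (a j - a j.-1) - (a (j - s)%N - a ((j - s).-1)%N))%R.
Proof.
move=> hs hj; rewrite /mul_1mz ifT; last lia. rewrite ifT; last lia.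
have -> : (j.-1 - s = (j - s).-1)%N by lia. lia.
Qed.

Lemma dF_eq (a : ser) s j : (0 < s)%N -> (s = j)%N ->
  (mul_1mz s a j - mul_1mz s a j.-1 = (a j - a j.-1) - a 0%N)%R.
Proof.
move=> hs hj; rewrite /mul_1mz ifT; last lia. rewrite ifF; last lia.
rewrite hj subnn. lia.
Qed.

Lemma dF_gt (a : ser) s j : (s > j)%N ->
  (mul_1mz s a j - mul_1mz s a j.-1 = (a j - a j.-1))%R.
Proof.
move=> hj; rewrite /mul_1mz ifF; last lia. rewrite ifF; last lia. lia.
Qed.

Lemma part1 n ds s : all (fun d => 0 < d) ds -> 0 < s -> unimodal_tails (frob n ds) ->
  forall i, 0 < i -> frob n (rcons ds s) i <= frob n (rcons ds s) i.-1 ->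
  forall d, i <= d -> frob n (rcons ds s) d <= frob n (rcons ds s) d.-1.
Proof.
move=> Hds Hs U i hi hh d hd.
set a := frob_ser n ds.
have pE : frob_ser n (rcons ds s) = mul_1mz s a by exact: frob_ser_rcons.
have a0 : a 0%N = 1%R by exact: frob_ser0.
set g := frob n ds.
have gE : forall j, g j = absz (trunc_ser a j) by [].
rewrite /frob pE in hh *.
case Hp: [forall j : 'I_d.+1, (0 < mul_1mz s a j)%R]; last by rewrite trunc_npos ?Hp.
move/posbP: Hp => Pp.
have Pa := @pos_a a s d Hs Pp.
have Hh : forall j, j <= d -> (absz (trunc_ser (mul_1mz s a) j) : int) = mul_1mz s a j
  by move=> j hj; apply: trunc_pos; apply: pos_down Pp hj.
have Hg : forall j, j <= d -> (g j : int) = a j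
  by move=> j hj; rewrite gE; apply: trunc_pos; apply: pos_down Pa hj.
suff : (mul_1mz s a d <= mul_1mz s a d.-1)%R.
  have := Hh d (leqnn d); have := Hh d.-1 (leq_pred d). lia.
have hpi : (mul_1mz s a i <= mul_1mz s a i.-1)%R.
  have := Hh i hd; have := Hh i.-1 ltac:(lia). lia.
have T0 : tailP g.
  apply: (@tail_mono g 0 U); lia.
case: (ssrnat.leqP (g d) (g d.-1)) => hgd.
- have hd1 : 1 <= d by lia.
  case: (ssrnat.ltngtP s d) => hsd.
  + have hb : (a ((d - s).-1)%N < a (d - s)%N)%R.
      have h1 : 1 <= d - s by lia.
      case: (ssrnat.leqP (g (d - s)) (g (d - s).-1)) => hb.
        have := @decr _ _ T0 h1 hb (d - s) d ltac:(lia) ltac:(lia).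
        have := Pp d (leqnn d); rewrite /mul_1mz ifT; last lia.
        have := Hg d (leqnn d); have := Hg (d - s) ltac:(lia). lia.
      have := Hg (d - s) ltac:(lia); have := Hg (d - s).-1 ltac:(lia). lia.
    have := @dF_lt a s _ Hs hsd. have := Hg d (leqnn d); have := Hg d.-1 ltac:(lia). lia.
  + have := @dF_gt a s _ hsd. have := Hg d (leqnn d); have := Hg d.-1 ltac:(lia). lia.
  + have := @dF_eq a s _ Hs hsd. have := Hg d (leqnn d); have := Hg d.-1 ltac:(lia). lia.
- have incr0 : forall k, 1 <= k -> k <= d -> g k.-1 < g k.
    move=> k hk hkd; case: (ssrnat.leqP (g k) (g k.-1)) => // hk'.
    have := @decr _ _ T0 hk hk' d.-1 d ltac:(lia) ltac:(lia). lia.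
  have g0 : g 0 = 1 by have := Hg 0 isT; lia.
  have hsi : s <= i.
    case: (ssrnat.leqP s i) => // hsi.
    have := @dF_gt a s _ hsi. have := incr0 i hi hd.
    have := Hg i hd; have := Hg i.-1 ltac:(lia). lia.
  have T1 : tailP (hiter 1 g).
    apply: (@tail_mono g 1 U). have := incr0 1 isT ltac:(lia); rewrite /= g0 => h1. by rewrite leq_max h1 orbT.
  have cE : forall k, 1 <= k -> k <= d -> (hiter 1 g k : int) = (a k - a k.-1)%R.
    move=> k hk hkd; rewrite /hiter /= /hder ifF; last lia.
    have := incr0 k hk hkd. have := Hg k hkd; have := Hg k.-1 ltac:(lia). lia.
  have c0 : hiter 1 g 0 = 1 by [].
  have hci : hiter 1 g i <= hiter 1 g (i - s).
    case: (ssrnat.ltngtP s i) hsi => // hsi' _.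
    * have := @dF_lt a s _ Hs hsi'. have := cE i hi hd; have := cE (i - s) ltac:(lia) ltac:(lia). lia.
    * have := @dF_eq a s _ Hs hsi'. have := cE i hi hd. have -> : (i - s = 0)%N by lia. rewrite c0. lia.
  have hcd := @nat_core _ s i d T1 Hs hsi hd hci.
  case: (ssrnat.ltngtP s d) => hsd; [| lia |].
  * have := @dF_lt a s _ Hs hsd. have := cE d ltac:(lia) (leqnn d); have := cE (d - s) ltac:(lia) ltac:(lia). lia.
  * have := @dF_eq a s _ Hs hsd. have := cE d ltac:(lia) (leqnn d). have e : (d - s = 0)%N by lia. rewrite e c0 in hcd. lia.
Qed.

Theorem lemma4p5 (n : nat) (ds : seq nat) (s : nat) :
  all (fun d => 0 < d) ds -> 0 < s ->
  unimodal_tails (frob n ds) ->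
  forall i, 0 < i -> frob n (rcons ds s) i <= frob n (rcons ds s) i.-1 ->
  (forall d, i <= d -> frob n (rcons ds s) d <= frob n (rcons ds s) d.-1) /\
  (1 <= n -> forall d, hiter 1 (frob n (rcons ds s)) d = frob n.-1 (rcons ds s) d).
Proof.
move=> Hds Hs U i hi hh; split; first exact: part1.
move=> hn d.
have HX : all (fun d => 0 < d) (rcons ds s) by rewrite all_rcons Hs Hds.
set X := rcons ds s.
set q := frob_ser n.-1 X.
have q0 : q 0%N = 1%R by exact: frob_ser0.
have pE : frob_ser n X = div_1mz q.
  rewrite /q /frob_ser; have e : n = n.-1.+1 by lia. by rewrite {1}e.
have p0 : frob_ser n X 0%N = 1%R by exact: frob_ser0.
have pS : forall j, 1 <= j -> (frob_ser n X j = frob_ser n X j.-1 + q j)%R.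
  move=> j hj; rewrite pE /div_1mz; case: j hj => // j _; by rewrite big_ord_recr.
have fq : frob n.-1 X = fun j => absz (trunc_ser q j) by [].
rewrite fq.
case: d => [|d].
  rewrite /=; have := @trunc_pos q 0.
  have H0 : forall j, j <= 0 -> (0 < q j)%R by move=> j; rewrite leqn0 => /eqP ->; rewrite q0.
  move=> /(_ H0); rewrite q0 /hder /=; lia.
rewrite /hiter /= /hder /=.
have hfr : forall j, frob n X j = absz (trunc_ser (frob_ser n X) j) by [].
case Hq: [forall j : 'I_d.+2, (0 < q j)%R].
  move/posbP: Hq => Pq.
  have Pp : forall j, j <= d.+1 -> (0 < frob_ser n X j)%R.
    elim=> [|j IH] hj; first by rewrite p0.
    rewrite pS //; have := IH ltac:(lia); have := Pq j.+1 hj; rewrite /=; lia.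
  have := @trunc_pos q d.+1 Pq.
  have := @trunc_pos (frob_ser n X) d.+1 Pp.
  have := @trunc_pos (frob_ser n X) d (@pos_down _ _ d Pp (leqnSn d)).
  have := Pq d.+1 (leqnn _). have := pS d.+1 isT. rewrite !hfr /=. lia.
rewrite trunc_npos ?Hq //.
apply/eqP; rewrite subn_eq0.
case Hp: [forall j : 'I_d.+2, (0 < frob_ser n X j)%R]; last by rewrite hfr trunc_npos ?Hp.
move/posbP: Hp => Pp.
move/forallPn: Hq => [[k hk]] /= hqk.
have hk1 : 1 <= k by case: k hk hqk => //; rewrite q0.
apply: (@part1 n ds s Hds Hs U k hk1) => //.
have := @trunc_pos (frob_ser n X) k (@pos_down _ _ k Pp hk).
have := @trunc_pos (frob_ser n X) k.-1 (@pos_down _ _ k.-1 Pp ltac:(lia)).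
have := pS k hk1. rewrite !hfr. lia.
Qed.
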